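(* For $k\in\mathbb{N}\cup\{0\}$ let $Pol_k(z)=\sum_{n\in\mathbb{N}:\,\sigma_\infty(n)=k}z^n$, and let $Z=\overline{\operatorname{span}\{Pol_k:k\ge0\}}\subset A(D)$ (closure in the topology of $A(D)$). Then $Z$ is invariant under $\mathcal{F}$, and \[ \mathcal{F}Pol_0=Pol_1,\qquad \mathcal{F}Pol_1=Pol_0+Pol_2,\qquad \mathcal{F}Pol_k=Pol_{k+1}\ (k\ge2). \] Moreover, $1$ is a simple eigenvalue of $\mathcal{F}$ as an operator in $\mathcal{L}(Z)$, with eigenvector $\psi=\sum_{k=0}^\infty Pol_k=\sum_{m\in\mathbb{N},\,\sigma_\infty(m)<\infty}z^m$.
   Context: $\mathbb{N}$ denotes the positive integers. $T$ is the Collatz map $T(n)=\frac{3n+1}2$ ($n$ odd), $T(n)=\frac n2$ ($n$ even); the total stopping time $\sigma_\infty(n)$ of $n\in\mathbb{N}$ is the least $k\ge0$ with $T^k(n)=1$ ($\infty$ if none). Each $Pol_k$ is a polynomial (finitely many $n$ have $\sigma_\infty(n)=k$). $D$ is the open unit disk, $A(D)$ the holomorphic functions on $D$ with the topology of uniform convergence on compact sets, and $\mathcal{F}$ the operator on $A(D)$ given by $\mathcal{F}\big(\sum_{n\ge0}a_nz^n\big)=\sum_{n\ge0}a_nz^{2n}+\sum_{k\ge0}a_{3k+2}z^{2k+1}$. *)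

(* Defs.v *)
From Stdlib Require Import Reals Arith List.
From Coquelicot Require Import Coquelicot.
Open Scope R_scope.

Definition T (n : nat) : nat :=
  if Nat.even n then n / 2 else (3 * n + 1) / 2.

(* stopsAt n k  <->  n is a positive integer and sigma_infty(n) = k,
   i.e. k is the least j >= 0 with T^j(n) = 1. *)
Definition stopsAt (n k : nat) : bool :=
  (0 <? n)%nat && Nat.eqb (Nat.iter k T n) 1
  && forallb (fun j => negb (Nat.eqb (Nat.iter j T n) 1)) (seq 0 k).

Definition finiteStop (n : nat) : Prop := exists k, stopsAt n k = true.

(* Elements of A(D) are represented by their Taylor coefficient sequences
   a : nat -> C, f(z) = sum_n a n z^n. *)
Definition coeffs := nat -> C.

(* f is holomorphic on the open unit disk: its power series converges on D *)
Definition inAD (a : coeffs) : Prop :=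
  forall z : C, Cmod z < 1 -> ex_series (fun n => (a n * Cpow z n)%C).

(* sup_{|z| <= r} |f(z) - g(z)| < eps  (one seminorm ball of the topology of
   uniform convergence on compact subsets of D; closed disks of radius r < 1
   are cofinal among compacts of D). *)
Definition closeOn (r eps : R) (f g : coeffs) : Prop :=
  forall z : C, Cmod z <= r ->
    exists v : C, is_series (fun n => ((f n - g n) * Cpow z n)%C) v
                  /\ Cmod v < eps.

Definition Pol (k : nat) : coeffs :=
  fun n => if stopsAt n k then RtoC 1 else RtoC 0.

Definition inSpanPol (g : coeffs) : Prop :=
  exists (N : nat) (c : nat -> C),
    forall n, g n = sum_n (fun k => (c k * Pol k n)%C) N.

Definition inZ (f : coeffs) : Prop :=
  inAD f /\
  forall r eps : R, 0 <= r < 1 -> 0 < eps ->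
    exists g, inSpanPol g /\ closeOn r eps f g.

(* The operator F(sum a_n z^n) = sum a_n z^{2n} + sum_k a_{3k+2} z^{2k+1},
   written on coefficients: coefficient of z^{2m} is a_m, of z^{2k+1} is a_{3k+2}. *)
Definition Fop (a : coeffs) : coeffs :=
  fun n => if Nat.even n then a (Nat.div2 n) else a (3 * Nat.div2 n + 2)%nat.

Definition PolSum (N : nat) : coeffs :=
  fun n => sum_n (fun k => Pol k n) N.

(* Main.v *)
Require Import Defs.
From Stdlib Require Import Reals Arith List.
From Coquelicot Require Import Coquelicot.
From Stdlib Require Import Lia Lra Classical ClassicalEpsilon FunctionalExtensionality.
Open Scope R_scope.

Lemma T_even m : T (2*m) = m.
Proof.
  unfold T. replace (Nat.even (2*m)) with true by (rewrite Nat.even_mul; reflexivity).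
  rewrite (Nat.mul_comm 2 m), Nat.div_mul; lia.
Qed.
Lemma T_odd m : T (2*m+1) = (3*m+2)%nat.
Proof.
  unfold T. replace (Nat.even (2*m+1)) with false by (rewrite Nat.even_add, Nat.even_mul; reflexivity).
  replace (3 * (2 * m + 1) + 1)%nat with ((3*m+2)*2)%nat by lia.
  rewrite Nat.div_mul; lia.
Qed.
Lemma T_0 : T 0 = 0%nat. Proof. reflexivity. Qed.
Lemma T_1 : T 1 = 2%nat. Proof. reflexivity. Qed.
Lemma T_2 : T 2 = 1%nat. Proof. reflexivity. Qed.

Lemma T_cases n : (exists m, n = 2*m /\ T n = m)%nat \/ (exists m, n = 2*m+1 /\ T n = 3*m+2)%nat.
Proof.
  destruct (Nat.Even_or_Odd n) as [[m Hm]|[m Hm]]; subst.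
  - left. exists m. split; [lia| apply T_even].
  - right. exists m. split; [lia| apply T_odd].
Qed.

Lemma T_pos n : (0 < n)%nat -> (0 < T n)%nat.
Proof. intros H. destruct (T_cases n) as [[m [-> ->]]|[m [-> ->]]]; lia. Qed.

Lemma T_le n : (T n <= 2*n)%nat.
Proof. destruct (T_cases n) as [[m [-> ->]]|[m [-> ->]]]; lia. Qed.

Lemma Fop_T a n : Fop a n = a (T n).
Proof.
  unfold Fop. destruct (Nat.Even_or_Odd n) as [[m Hm]|[m Hm]]; subst.
  - rewrite T_even. replace (Nat.even (2*m)) with true by (rewrite Nat.even_mul; reflexivity).
    f_equal. apply Nat.div2_double.
  - rewrite T_odd. replace (Nat.even (2*m+1)) with false by (rewrite Nat.even_add, Nat.even_mul; reflexivity).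
    rewrite Nat.add_1_r, Nat.div2_succ_double. reflexivity.
Qed.

Lemma stopsAt_iff n k : stopsAt n k = true <->
  (0 < n)%nat /\ Nat.iter k T n = 1%nat /\ (forall j, (j < k)%nat -> Nat.iter j T n <> 1%nat).
Proof.
  unfold stopsAt. rewrite !Bool.andb_true_iff, Nat.ltb_lt, Nat.eqb_eq, forallb_forall.
  split.
  - intros [[H1 H2] H3]. repeat split; auto. intros j Hj.
    specialize (H3 j). rewrite in_seq in H3.
    assert (negb (Nat.iter j T n =? 1) = true) by (apply H3; lia).
    apply Bool.negb_true_iff in H. apply Nat.eqb_neq in H. auto.
  - intros [H1 [H2 H3]]. repeat split; auto. intros j Hj. rewrite in_seq in Hj.
    apply Bool.negb_true_iff, Nat.eqb_neq. apply H3. lia.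
Qed.

Lemma stopsAt_unique n k k' : stopsAt n k = true -> stopsAt n k' = true -> k = k'.
Proof.
  rewrite !stopsAt_iff. intros [_ [A B]] [_ [C D]].
  destruct (lt_eq_lt_dec k k') as [[H|H]|H]; auto.
  - exfalso. apply (D k H A).
  - exfalso. apply (B k' H C).
Qed.

Lemma stopsAt_0 n : stopsAt n 0 = true <-> n = 1%nat.
Proof.
  rewrite stopsAt_iff. simpl. split.
  - intros [_ [H _]]; auto.
  - intros ->. repeat split; auto. intros; lia.
Qed.

Lemma stopsAt_S n k : (0 < n)%nat -> n <> 1%nat ->
  (stopsAt n (S k) = true <-> stopsAt (T n) k = true).
Proof.
  intros Hp H1. rewrite !stopsAt_iff. rewrite Nat.iter_succ_r. split.
  - intros [_ [A B]]. repeat split; auto using T_pos.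
    intros j Hj. rewrite <- Nat.iter_succ_r. apply B. lia.
  - intros [_ [A B]]. repeat split; auto.
    intros [|j] Hj.
    + simpl. auto.
    + rewrite Nat.iter_succ_r. apply B. lia.
Qed.

Lemma stopsAt_Sb n k : (0 < n)%nat -> n <> 1%nat -> stopsAt n (S k) = stopsAt (T n) k.
Proof. intros. apply Bool.eq_iff_eq_true. apply stopsAt_S; auto. Qed.

Lemma stopsAt_zero k : stopsAt 0 k = false.
Proof. reflexivity. Qed.

Lemma stopsAt_1 k : stopsAt 1 k = true <-> k = 0%nat.
Proof. split.
  - intros H. apply (stopsAt_unique 1); auto.
  - intros ->. reflexivity.
Qed.

Lemma stopsAt_2 k : stopsAt 2 k = true <-> k = 1%nat.
Proof. split.
  - intros H. apply (stopsAt_unique 2); auto.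
  - intros ->. reflexivity.
Qed.

Lemma Pol_T k n : (0 < n)%nat -> n <> 1%nat -> Pol k (T n) = Pol (S k) n.
Proof. intros. unfold Pol. rewrite stopsAt_Sb; auto. Qed.

Lemma Pol_at0 k : Pol k 0%nat = RtoC 0.
Proof. reflexivity. Qed.

Lemma Pol_val k n : Pol k n = if stopsAt n k then RtoC 1 else RtoC 0.
Proof. reflexivity. Qed.

Lemma Pol_false k n : stopsAt n k = false -> Pol k n = RtoC 0.
Proof. intros H; unfold Pol; rewrite H; auto. Qed.

Lemma not_true b : b <> true -> b = false.
Proof. destruct b; tauto. Qed.

Lemma Fop_Pol0 : Fop (Pol 0) = Pol 1.
Proof.
  apply functional_extensionality; intro n. rewrite Fop_T.
  destruct (Nat.eq_dec n 0) as [->|Hn0]; [reflexivity|].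
  destruct (Nat.eq_dec n 1) as [->|Hn1]; [reflexivity|].
  apply Pol_T; lia.
Qed.

Lemma Fop_Pol1 : Fop (Pol 1) = (fun n => (Pol 0 n + Pol 2 n)%C).
Proof.
  apply functional_extensionality; intro n. rewrite Fop_T.
  destruct (Nat.eq_dec n 0) as [->|Hn0].
  { rewrite T_0, !Pol_at0. rewrite Cplus_0_l. reflexivity. }
  destruct (Nat.eq_dec n 1) as [->|Hn1].
  { rewrite T_1. unfold Pol. simpl. rewrite Cplus_0_r. reflexivity. }
  rewrite Pol_T by lia. rewrite (Pol_false 0 n). { rewrite Cplus_0_l. auto. }
  apply not_true. rewrite stopsAt_0. auto.
Qed.

Lemma Fop_Polk k : (2 <= k)%nat -> Fop (Pol k) = Pol (S k).
Proof.
  intros Hk.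
  apply functional_extensionality; intro n. rewrite Fop_T.
  destruct (Nat.eq_dec n 0) as [->|Hn0]; [reflexivity|].
  destruct (Nat.eq_dec n 1) as [->|Hn1].
  { rewrite T_1. rewrite !Pol_false; auto; apply not_true.
    - rewrite stopsAt_1; lia.
    - rewrite stopsAt_2; lia. }
  apply Pol_T; lia.
Qed.

Lemma fs_0 : ~ finiteStop 0.
Proof. intros [k H]. rewrite stopsAt_zero in H. discriminate. Qed.

Lemma fs_T n : (0 < n)%nat -> (finiteStop (T n) <-> finiteStop n).
Proof.
  intros Hn. destruct (Nat.eq_dec n 1) as [->|H1].
  - rewrite T_1. split; intros _.
    + exists 0%nat. reflexivity.
    + exists 1%nat. reflexivity.
  - split; intros [k Hk].
    + exists (S k). apply stopsAt_S; auto.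
    + destruct k as [|k].
      * apply stopsAt_0 in Hk. tauto.
      * exists k. apply stopsAt_S; auto.
Qed.

Lemma nfs_T n : ~ finiteStop n -> ~ finiteStop (T n).
Proof.
  intros H. destruct (Nat.eq_dec n 0) as [->|Hn].
  - rewrite T_0. auto.
  - rewrite fs_T by lia. auto.
Qed.

Lemma fs_iter n : finiteStop n -> exists k, Nat.iter k T n = 1%nat.
Proof. intros [k Hk]. apply stopsAt_iff in Hk. exists k. tauto. Qed.

Lemma inv_iter (g : coeffs) : (forall n, g (T n) = g n) -> forall k n, g (Nat.iter k T n) = g n.
Proof.
  intros H k. induction k; intros n; simpl; auto. rewrite H. auto.
Qed.

Lemma nfs_false n : ~ finiteStop n -> forall k, stopsAt n k = false.
Proof. intros H k. apply not_true. intros E. apply H. exists k; auto. Qed.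


Definition SP (c : nat -> C) (N n : nat) : C := sum_n (fun k => (c k * Pol k n)%C) N.

Lemma SP_stop c N n j : stopsAt n j = true -> SP c N n = if (j <=? N)%nat then c j else RtoC 0.
Proof.
  intros Hj. unfold SP. induction N.
  - rewrite sum_O. rewrite Pol_val. destruct j.
    + rewrite Hj. simpl. apply Cmult_1_r.
    + simpl. destruct (stopsAt n 0) eqn:E.
      * pose proof (stopsAt_unique _ _ _ Hj E). discriminate.
      * apply Cmult_0_r.
  - rewrite sum_Sn, IHN. rewrite Pol_val.
    destruct (Nat.eq_dec j (S N)) as [->|Hne].
    + rewrite Hj. rewrite Nat.leb_refl. replace (S N <=? N)%nat with false by (symmetry; apply Nat.leb_gt; lia).
      change (plus (RtoC 0) (c (S N) * RtoC 1)%C = c (S N)). unfold plus; simpl. rewrite Cmult_1_r. apply Cplus_0_l.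
    + destruct (stopsAt n (S N)) eqn:E.
      { pose proof (stopsAt_unique _ _ _ Hj E). lia. }
      replace (j <=? S N)%nat with (j <=? N)%nat.
      2:{ destruct (Nat.leb_spec j N); destruct (Nat.leb_spec j (S N)); auto; lia. }
      change (plus (if (j <=? N)%nat then c j else RtoC 0) (c (S N) * RtoC 0)%C = (if (j <=? N)%nat then c j else RtoC 0)).
      unfold plus; simpl. rewrite Cmult_0_r, Cplus_0_r. auto.
Qed.

Lemma SP_nostop c N n : (forall k, stopsAt n k = false) -> SP c N n = RtoC 0.
Proof.
  intros H. unfold SP. induction N.
  - rewrite sum_O, Pol_false by auto. apply Cmult_0_r.
  - rewrite sum_Sn, IHN, (Pol_false (S N)) by auto.
    change (RtoC 0 + c (S N) * RtoC 0 = RtoC 0)%C. rewrite Cmult_0_r. apply Cplus_0_l.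
Qed.

Lemma span_SP g : inSpanPol g -> exists N c, forall n, g n = SP c N n.
Proof. intros [N [c H]]. exists N, c. exact H. Qed.

Lemma span_vanish g n : inSpanPol g -> ~ finiteStop n -> g n = RtoC 0.
Proof.
  intros Hg Hn. destruct (span_SP g Hg) as [N [c H]]. rewrite H. apply SP_nostop.
  apply nfs_false; auto.
Qed.

Lemma stop_or n : (exists j, stopsAt n j = true) \/ (forall k, stopsAt n k = false).
Proof.
  destruct (classic (finiteStop n)) as [H|H]; [left; exact H| right; apply nfs_false; auto].
Qed.

Lemma span_Fop g : inSpanPol g -> inSpanPol (Fop g).
Proof.
  intros Hg. destruct (span_SP g Hg) as [N [c H]].
  set (ct := fun j => if (j <=? N)%nat then c j else RtoC 0).
  exists (S N), (fun k => match k with 0%nat => ct 1%nat | S j => ct j end).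
  intros n. fold (SP (fun k => match k with 0%nat => ct 1%nat | S j => ct j end) (S N) n).
  rewrite Fop_T, H.
  destruct (stop_or n) as [[j Hj]|Hn].
  - destruct j as [|j].
    + apply stopsAt_0 in Hj. subst n. rewrite T_1.
      rewrite (SP_stop _ _ 2 1) by reflexivity. rewrite (SP_stop _ _ 1 0) by reflexivity.
      simpl. reflexivity.
    + assert (Hp : (0 < n)%nat). { destruct n; [rewrite stopsAt_zero in Hj; discriminate| lia]. }
      assert (H1 : n <> 1%nat). { intros ->. apply stopsAt_1 in Hj. discriminate. }
      rewrite (SP_stop _ _ n (S j)) by auto.
      rewrite (SP_stop _ _ (T n) j) by (apply stopsAt_S; auto).
      unfold ct. destruct (Nat.leb_spec j N); destruct (Nat.leb_spec (S j) (S N)); try lia; auto.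
  - rewrite !SP_nostop; auto.
    apply nfs_false. apply nfs_T. intros [k Hk]. rewrite Hn in Hk. discriminate.
Qed.

Lemma fin_max (f : nat -> R) N : exists K, 0 <= K /\ forall j, (j <= N)%nat -> f j <= K.
Proof.
  induction N.
  - exists (Rmax 0 (f 0%nat)). split; [apply Rmax_l|]. intros j Hj. replace j with 0%nat by lia. apply Rmax_r.
  - destruct IHN as [K [HK H]]. exists (Rmax K (f (S N))). split.
    + eapply Rle_trans; [exact HK| apply Rmax_l].
    + intros j Hj. destruct (Nat.eq_dec j (S N)) as [->|Hne]; [apply Rmax_r|].
      eapply Rle_trans; [apply H; lia| apply Rmax_l].
Qed.

Lemma span_bounded g : inSpanPol g -> exists K, 0 <= K /\ forall n, Cmod (g n) <= K.
Proof.
  intros Hg. destruct (span_SP g Hg) as [N [c H]].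
  destruct (fin_max (fun j => Cmod (c j)) N) as [K [HK HK2]].
  exists K. split; auto. intros n. rewrite H.
  destruct (stop_or n) as [[j Hj]|Hn].
  - rewrite (SP_stop _ _ _ j Hj). destruct (Nat.leb_spec j N).
    + apply HK2; auto.
    + rewrite Cmod_0; auto.
  - rewrite SP_nostop by auto. rewrite Cmod_0; auto.
Qed.

Definition psi : coeffs := fun n => if excluded_middle_informative (finiteStop n) then RtoC 1 else RtoC 0.

Lemma psi_fs m : finiteStop m -> psi m = RtoC 1.
Proof. intros H. unfold psi. destruct (excluded_middle_informative (finiteStop m)); tauto. Qed.
Lemma psi_nfs m : ~ finiteStop m -> psi m = RtoC 0.
Proof. intros H. unfold psi. destruct (excluded_middle_informative (finiteStop m)); tauto. Qed.

Lemma psi_T n : psi (T n) = psi n.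
Proof.
  destruct (Nat.eq_dec n 0) as [->|Hn]; [reflexivity|].
  destruct (classic (finiteStop n)) as [H|H].
  - rewrite !psi_fs; auto. apply fs_T; auto; lia.
  - rewrite !psi_nfs; auto. apply nfs_T; auto.
Qed.

Lemma Fop_psi : Fop psi = psi.
Proof. apply functional_extensionality; intro n. rewrite Fop_T. apply psi_T. Qed.

Lemma psi_nz : psi <> (fun _ => RtoC 0).
Proof.
  intros H. assert (E : psi 1%nat = RtoC 0) by (rewrite H; auto).
  rewrite psi_fs in E by (exists 0%nat; reflexivity).
  injection E. lra.
Qed.

Lemma psi_bound n : Cmod (psi n) <= 1.
Proof.
  unfold psi. destruct (excluded_middle_informative (finiteStop n)).
  - rewrite Cmod_1; lra.
  - rewrite Cmod_0; lra.
Qed.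

Lemma PolSum_SP N n : PolSum N n = SP (fun _ => RtoC 1) N n.
Proof. unfold PolSum, SP. apply sum_n_ext. intros k. rewrite Cmult_1_l. auto. Qed.

Lemma span_PolSum N : inSpanPol (PolSum N).
Proof. exists N, (fun _ => RtoC 1). intros n. apply PolSum_SP. Qed.

Lemma stop_below n0 : exists N0, forall n j, (n < n0)%nat -> stopsAt n j = true -> (j <= N0)%nat.
Proof.
  induction n0.
  - exists 0%nat. intros; lia.
  - destruct IHn0 as [N0 H]. destruct (stop_or n0) as [[j Hj]|Hn].
    + exists (Nat.max N0 j). intros n k Hn Hk. destruct (Nat.eq_dec n n0) as [->|Hne].
      * pose proof (stopsAt_unique _ _ _ Hj Hk). lia.
      * pose proof (H n k ltac:(lia) Hk). lia.
    + exists N0. intros n k Hn' Hk. destruct (Nat.eq_dec n n0) as [->|Hne].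
      * rewrite Hn in Hk; discriminate.
      * apply (H n k); auto; lia.
Qed.

Lemma diff_psi_small n0 N0 N : (forall n j, (n < n0)%nat -> stopsAt n j = true -> (j <= N0)%nat) ->
  (N0 <= N)%nat -> forall n, (n < n0)%nat -> (psi n - PolSum N n)%C = RtoC 0.
Proof.
  intros H HN n Hn. rewrite PolSum_SP. destruct (stop_or n) as [[j Hj]|Hs].
  - rewrite psi_fs by (exists j; auto). rewrite (SP_stop _ _ _ j Hj).
    pose proof (H n j Hn Hj). replace (j <=? N)%nat with true by (symmetry; apply Nat.leb_le; lia).
    ring. 
  - rewrite psi_nfs. rewrite SP_nostop by auto. ring.
    intros [k Hk]. rewrite Hs in Hk. discriminate.
Qed.

Lemma diff_psi_bound N n : Cmod (psi n - PolSum N n)%C <= 1.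
Proof.
  rewrite PolSum_SP. destruct (stop_or n) as [[j Hj]|Hs].
  - rewrite psi_fs by (exists j; auto). rewrite (SP_stop _ _ _ j Hj).
    destruct (j <=? N)%nat.
    + replace (RtoC 1 - RtoC 1)%C with (RtoC 0) by ring. rewrite Cmod_0; lra.
    + replace (RtoC 1 - RtoC 0)%C with (RtoC 1) by ring. rewrite Cmod_1; lra.
  - rewrite psi_nfs. rewrite SP_nostop by auto. replace (RtoC 0 - RtoC 0)%C with (RtoC 0) by ring. rewrite Cmod_0; lra.
    intros [k Hk]. rewrite Hs in Hk. discriminate.
Qed.



Lemma Rdiv_lt_1 a b : 0 < b -> a < b -> a / b < 1.
Proof. intros Hb H. unfold Rdiv. apply (Rmult_lt_reg_r b); [lra|].
  rewrite Rmult_assoc, Rinv_l, Rmult_1_l, Rmult_1_r; lra. Qed.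
Lemma Rdiv_le_0_compat a b : 0 <= a -> 0 < b -> 0 <= a / b.
Proof. intros. apply Rmult_le_pos; [lra| left; apply Rinv_0_lt_compat; lra]. Qed.
Lemma pow_le_1 x k : 0 <= x <= 1 -> x ^ k <= 1.
Proof. intros H. rewrite <- (pow1 k). apply pow_incr. lra. Qed.
Lemma Rle_pow_le x m n : 0 <= x -> x <= 1 -> (m <= n)%nat -> x ^ n <= x ^ m.
Proof. intros H0 H1 Hmn. replace n with (m + (n - m))%nat by lia. rewrite pow_add.
  assert (0 <= x ^ m) by (apply pow_le; auto). assert (x ^ (n - m) <= 1) by (apply pow_le_1; lra).
  assert (0 <= x ^ (n-m)) by (apply pow_le; auto). nra. Qed.

Lemma normC (x : C) : norm x = Cmod x.
Proof. reflexivity. Qed.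

Lemma SB (a : nat -> C) (u : nat -> R) (U : R) :
  (forall n, Cmod (a n) <= u n) -> is_series u U -> exists v, is_series a v /\ Cmod v <= U.
Proof.
  intros Hb Hu.
  assert (Ea : ex_series a).
  { apply (@ex_series_le C_AbsRing C_CompleteNormedModule a u). intros n. rewrite normC. auto. exists U; auto. }
  destruct Ea as [v Hv]. exists v. split; auto.
  assert (L1 : is_lim_seq (fun n => norm (sum_n a n)) (norm v)).
  { unfold is_lim_seq. simpl. eapply filterlim_comp. exact Hv. apply filterlim_norm. }
  assert (L2 : is_lim_seq (sum_n u) U). { exact Hu. }
  rewrite <- normC.
  assert (Rbar_le (norm v) U).
  { eapply is_lim_seq_le; [|exact L1|exact L2]. intros n. simpl.
    unfold sum_n. eapply Rle_trans. exact (@norm_sum_n_m C_AbsRing C_NormedModule a 0%nat n). apply sum_n_m_le. intros k. rewrite normC. auto. }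
  exact H.
Qed.

Lemma geom_scaled (K s : R) : 0 <= s < 1 -> is_series (fun n => K * s ^ n) (K / (1 - s)).
Proof.
  intros Hs. unfold Rdiv. 
  apply (is_series_ext (fun n => scal K (s ^ n))). { intros n. reflexivity. }
  apply (@is_series_scal R_AbsRing R_NormedModule). apply is_series_geom. rewrite Rabs_pos_eq; lra.
Qed.

Lemma ex_series_bounded (a : nat -> C) : ex_series a -> exists B, 0 <= B /\ forall n, Cmod (a n) <= B.
Proof.
  intros Ea. apply (@Cauchy_ex_series C_AbsRing C_CompleteNormedModule) in Ea.
  destruct (Ea (mkposreal 1 Rlt_0_1)) as [N HN].
  destruct (fin_max (fun n => Cmod (a n)) N) as [K [HK H]].
  exists (Rmax K 1). split. { eapply Rle_trans; [exact HK| apply Rmax_l]. }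
  intros n. destruct (Nat.le_gt_cases n N).
  - eapply Rle_trans; [apply H; auto| apply Rmax_l].
  - pose proof (HN n n ltac:(lia) ltac:(lia)) as Hn. simpl in Hn.
    rewrite sum_n_n in Hn. rewrite normC in Hn. eapply Rle_trans; [left; exact Hn| apply Rmax_r].
Qed.

Definition decay (f : coeffs) : Prop :=
  forall r, 0 <= r < 1 -> exists B q, 0 <= B /\ 0 <= q < 1 /\ forall l, Cmod (f l) * r ^ l <= B * q ^ l.

Lemma inAD_decay f : inAD f -> decay f.
Proof.
  intros Hf r Hr. set (rho := (1 + r) / 2).
  assert (Hrho : 0 < rho < 1) by (unfold rho; lra).
  assert (Hrr : r < rho) by (unfold rho; lra).
  destruct (ex_series_bounded _ (Hf (RtoC rho) ltac:(rewrite Cmod_R, Rabs_pos_eq; lra))) as [B [HB H]].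
  exists B, (r / rho). split; auto. split.
  { split. apply Rdiv_le_0_compat; lra. apply Rdiv_lt_1; lra. }
  intros l. specialize (H l). rewrite Cmod_mult, Cmod_pow, Cmod_R, Rabs_pos_eq in H by lra.
  replace (r ^ l) with (rho ^ l * (r / rho) ^ l).
  2:{ rewrite <- Rpow_mult_distr. f_equal. field. lra. }
  rewrite <- Rmult_assoc. apply Rmult_le_compat_r; auto. apply pow_le. apply Rdiv_le_0_compat; lra.
Qed.

Lemma decay_inAD f : decay f -> inAD f.
Proof.
  intros Hf z Hz. destruct (Hf (Cmod z) ltac:(split; [apply Cmod_ge_0| auto])) as [B [q [HB [Hq H]]]].
  destruct (SB (fun n => (f n * Cpow z n)%C) (fun n => B * q ^ n) (B / (1 - q))) as [v [Hv _]].
  - intros n. rewrite Cmod_mult, Cmod_pow. apply H.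
  - apply geom_scaled; auto.
  - exists v; auto.
Qed.

Lemma bounded_decay f K : 0 <= K -> (forall n, Cmod (f n) <= K) -> decay f.
Proof.
  intros HK H r Hr. exists K, r. repeat split; try lra.
  intros l. apply Rmult_le_compat_r. apply pow_le; lra. auto.
Qed.

Lemma decay_minus f g : decay f -> decay g -> decay (fun n => (f n - g n)%C).
Proof.
  intros Hf Hg r Hr. destruct (Hf r Hr) as [B1 [q1 [HB1 [Hq1 H1]]]].
  destruct (Hg r Hr) as [B2 [q2 [HB2 [Hq2 H2]]]].
  exists (B1 + B2), (Rmax q1 q2). split; [lra|]. split.
  { split. eapply Rle_trans; [apply Hq1|apply Rmax_l]. apply Rmax_lub_lt; lra. }
  intros l. 
  assert (E1 : q1 ^ l <= Rmax q1 q2 ^ l) by (apply pow_incr; split; [lra|apply Rmax_l]).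
  assert (E2 : q2 ^ l <= Rmax q1 q2 ^ l) by (apply pow_incr; split; [lra|apply Rmax_r]).
  assert (Hrl : 0 <= r ^ l) by (apply pow_le; lra).
  unfold Cminus. eapply Rle_trans.
  { apply Rmult_le_compat_r; auto. eapply Rle_trans. apply Cmod_triangle. rewrite Cmod_opp. apply Rle_refl. }
  specialize (H1 l). specialize (H2 l).
  assert (B1 * q1 ^ l <= B1 * Rmax q1 q2 ^ l) by (apply Rmult_le_compat_l; auto).
  assert (B2 * q2 ^ l <= B2 * Rmax q1 q2 ^ l) by (apply Rmult_le_compat_l; auto).
  nra.
Qed.

Lemma span_decay g : inSpanPol g -> decay g.
Proof. intros Hg. destruct (span_bounded g Hg) as [K [HK H]]. apply (bounded_decay g K); auto. Qed.

Lemma span_inAD g : inSpanPol g -> inAD g.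
Proof. intros; apply decay_inAD, span_decay; auto. Qed.

Lemma psi_inAD : inAD psi.
Proof. apply decay_inAD. apply (bounded_decay psi 1). lra. apply psi_bound. Qed.

Lemma Fop_bound (a : coeffs) (rho q K : R) : 0 < rho <= 1 -> 0 <= q ->
  (forall m, Cmod (a m) * rho ^ m <= K) -> forall l, Cmod (a (T l)) * (q * rho ^ 2) ^ l <= K * q ^ l.
Proof.
  intros Hr Hq H l. rewrite Rpow_mult_distr, <- pow_mult.
  assert (rho ^ (2 * l) <= rho ^ T l).
  { apply Rle_pow_le; [lra| lra|]. apply T_le. }
  specialize (H (T l)).
  assert (0 <= q ^ l) by (apply pow_le; auto).
  assert (0 <= Cmod (a (T l))) by apply Cmod_ge_0.
  assert (Cmod (a (T l)) * rho ^ (2 * l) <= K).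
  { eapply Rle_trans; [|exact H]. apply Rmult_le_compat_l; auto. }
  nra.
Qed.

Lemma decay_Fop f : decay f -> decay (Fop f).
Proof.
  intros Hf r Hr. set (rho := (1 + r) / 2).
  assert (Hrho : 0 < rho < 1) by (unfold rho; lra).
  destruct (Hf rho ltac:(lra)) as [B [q [HB [Hq H]]]].
  exists B, (r / rho ^ 2). split; auto.
  assert (Hr2 : r < rho ^ 2) by (unfold rho; nra).
  split. { split. apply Rdiv_le_0_compat; nra. apply Rdiv_lt_1; nra. }
  intros l. rewrite Fop_T.
  replace r with (r / rho ^ 2 * rho ^ 2) at 1 by (field; lra).
  apply Fop_bound; [lra| apply Rdiv_le_0_compat; nra|].
  intros m. eapply Rle_trans; [apply H|]. rewrite <- (Rmult_1_r B) at 2. apply Rmult_le_compat_l; auto.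
  apply pow_le_1; lra.
Qed.


Lemma div_lt a b c : 0 < c -> a < b * c -> a / c < b.
Proof. intros Hc H. apply (Rmult_lt_reg_r c); auto. unfold Rdiv.
  rewrite Rmult_assoc, Rinv_l, Rmult_1_r; lra. Qed.

Lemma small_pow s e : 0 <= s < 1 -> 0 < e -> exists n0, s ^ n0 < e.
Proof.
  intros Hs He. destruct (pow_lt_1_zero s ltac:(rewrite Rabs_pos_eq; lra) e He) as [N HN].
  exists N. specialize (HN N (le_n N)). rewrite Rabs_pos_eq in HN; auto. apply pow_le; lra.
Qed.

Lemma psi_conv r eps : 0 <= r < 1 -> 0 < eps ->
  exists N0, forall N, (N0 <= N)%nat -> closeOn r eps psi (PolSum N).
Proof.
  intros Hr He. set (s := (1 + r) / 2).
  assert (Hs : 0 < s < 1) by (unfold s; lra).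
  assert (Hrs : r <= s ^ 2) by (unfold s; nra).
  destruct (small_pow s (eps * (1 - s) / 2) ltac:(lra) ltac:(apply Rdiv_lt_0_compat; nra)) as [n0 Hn0].
  destruct (stop_below n0) as [N0 HN0]. exists N0. intros N HN z Hz.
  destruct (SB (fun n => ((psi n - PolSum N n) * Cpow z n)%C) (fun n => s ^ n0 * s ^ n) (s ^ n0 / (1 - s)))
    as [v [Hv Hvb]].
  - intros n. rewrite Cmod_mult, Cmod_pow.
    assert (0 <= s ^ n0 * s ^ n) by (apply Rmult_le_pos; apply pow_le; lra).
    destruct (Nat.lt_ge_cases n n0).
    + rewrite (diff_psi_small n0 N0 N HN0 HN n H0), Cmod_0. lra.
    + assert (E1 : Cmod z ^ n <= r ^ n) by (apply pow_incr; split; [apply Cmod_ge_0| auto]).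
      assert (E2 : r ^ n <= s ^ n * s ^ n).
      { rewrite <- Rpow_mult_distr. apply pow_incr. split; [lra|]. assert (s*s = s^2) by ring. lra. }
      assert (E3 : s ^ n <= s ^ n0) by (apply Rle_pow_le; [lra|lra|lia]).
      assert (E4 : 0 <= s ^ n) by (apply pow_le; lra).
      assert (E5 : 0 <= Cmod z ^ n) by (apply pow_le; apply Cmod_ge_0).
      pose proof (diff_psi_bound N n). pose proof (Cmod_ge_0 (psi n - PolSum N n)%C).
      nra.
  - apply geom_scaled; lra.
  - exists v. split; auto. eapply Rle_lt_trans; [exact Hvb|]. apply div_lt; [lra|].
    assert (0 < eps * (1 - s)) by nra. lra.
Qed.

Lemma psi_inZ : inZ psi.
Proof.
  split; [apply psi_inAD|]. intros r eps Hr He.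
  destruct (psi_conv r eps Hr He) as [N0 H]. exists (PolSum N0). split.
  - apply span_PolSum.
  - apply H. lia.
Qed.


Lemma sum_Sn_C (a : nat -> C) n : sum_n a (S n) = Cplus (sum_n a n) (a (S n)).
Proof. rewrite sum_Sn. reflexivity. Qed.
Lemma sum_O_C (a : nat -> C) : sum_n a 0 = a 0%nat.
Proof. apply sum_O. Qed.
Lemma is_series_Cmult (a : nat -> C) c l : is_series a l -> is_series (fun n => Cmult c (a n)) (Cmult c l).
Proof. intros H. apply (@is_series_scal C_AbsRing C_NormedModule c a l H). Qed.
Lemma sum_n_Cmult (a : nat -> C) c N : sum_n (fun n => Cmult c (a n)) N = Cmult c (sum_n a N).
Proof. apply (@sum_n_mult_l C_Ring). Qed.

Lemma is_series_sum_fin (a : nat -> nat -> C) (w : nat -> C) N :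
  (forall j, is_series (a j) (w j)) -> is_series (fun l => sum_n (fun j => a j l) N) (sum_n w N).
Proof.
  intros H. induction N.
  - rewrite sum_O_C. apply (is_series_ext (a 0%nat)); [intros; rewrite sum_O_C; auto| apply H].
  - rewrite sum_Sn_C.
    apply (is_series_ext (fun l => plus (sum_n (fun j => a j l) N) (a (S N) l))).
    { intros l. rewrite sum_Sn_C. reflexivity. }
    apply (@is_series_plus C_AbsRing C_NormedModule); auto.
Qed.

Lemma sum_single (x : C) m n : sum_n (fun l => if (l =? m)%nat then x else RtoC 0) n = if (m <=? n)%nat then x else RtoC 0.
Proof.
  induction n.
  - rewrite sum_O_C. destruct m; simpl; auto.
  - rewrite sum_Sn_C, IHn. destruct (Nat.eqb_spec (S n) m) as [Hm|Hne].
    + subst m. replace (S n <=? n)%nat with false by (symmetry; apply Nat.leb_gt; lia). rewrite Nat.leb_refl. apply Cplus_0_l.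
    + rewrite Cplus_0_r. destruct (Nat.leb_spec m n); destruct (Nat.leb_spec m (S n)); auto; lia.
Qed.

Lemma is_series_single (x : C) m : is_series (fun l => if (l =? m)%nat then x else RtoC 0) x.
Proof.
  unfold is_series. apply filterlim_ext_loc with (fun _ => x).
  - exists m. intros n Hn. rewrite sum_single. replace (m <=? n)%nat with true; auto. symmetry; apply Nat.leb_le; lia.
  - apply filterlim_const.
Qed.

Lemma demoivre th k : Cpow (cos th, sin th) k = (cos (INR k * th), sin (INR k * th)).
Proof.
  induction k.
  - simpl. rewrite Rmult_0_l, cos_0, sin_0. reflexivity.
  - rewrite Cpow_S, IHk. rewrite S_INR. unfold Cmult. simpl.
    replace ((INR k + 1) * th) with (INR k * th + th) by ring.
    rewrite cos_plus, sin_plus. f_equal; ring.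
Qed.

Lemma Cmod_unit th : Cmod (cos th, sin th) = 1.
Proof.
  unfold Cmod. simpl. pose proof (sin2_cos2 th). unfold Rsqr in H.
  replace (cos th * (cos th * 1) + sin th * (sin th * 1)) with 1 by lra. apply sqrt_1.
Qed.

Lemma choice_nat (P : nat -> C -> Prop) : (forall j, exists v, P j v) -> exists f, forall j, P j (f j).
Proof.
  intros H. exists (fun j => proj1_sig (constructive_indefinite_description _ (H j))).
  intros j. apply (proj2_sig (constructive_indefinite_description _ (H j))).
Qed.

Lemma sum_one N : sum_n (fun _ => RtoC 1) N = RtoC (INR (S N)).
Proof.
  induction N.
  - rewrite sum_O_C. simpl. reflexivity.
  - rewrite sum_Sn_C, IHN. rewrite (S_INR (S N)). unfold Cplus, RtoC. simpl. f_equal; ring.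
Qed.

Lemma geom_C (x : C) N : ((x - 1) * sum_n (fun j => Cpow x j) N = Cpow x (S N) - 1)%C.
Proof.
  induction N.
  - rewrite sum_O_C. simpl. ring.
  - rewrite sum_Sn_C. rewrite Cmult_plus_distr_l, IHN. rewrite !Cpow_S. ring.
Qed.

Section Roots.
Variable N : nat.
Let M := S N.
Let th := 2 * PI / INR M.
Let om : C := (cos th, sin th).

Lemma INR_M_pos : 0 < INR M.
Proof. apply lt_0_INR. unfold M; lia. Qed.

Lemma om_M : Cpow om M = RtoC 1.
Proof.
  unfold om. rewrite demoivre. unfold th. pose proof INR_M_pos.
  replace (INR M * (2 * PI / INR M)) with (2 * PI) by (field; lra).
  rewrite cos_2PI, sin_2PI. reflexivity.
Qed.

Lemma om_pow_mod k : Cpow om k = Cpow om (k mod M).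
Proof.
  rewrite (Nat.div_mod_eq k M) at 1. rewrite Cpow_add_r, Cpow_mult_r, om_M, Cpow_1_l. ring.
Qed.

Lemma om_one k : Cpow om k = RtoC 1 -> (k mod M = 0)%nat.
Proof.
  intros H. rewrite om_pow_mod in H. set (t := (k mod M)%nat) in *.
  assert (Ht : (t < M)%nat) by (apply Nat.mod_upper_bound; unfold M; lia).
  destruct (Nat.eq_dec t 0) as [E|E]; auto. exfalso.
  unfold om in H. rewrite demoivre in H. injection H as Hc Hs.
  pose proof INR_M_pos. pose proof PI_RGT_0.
  assert (Hlt : INR t < INR M) by (apply lt_INR; auto).
  assert (Hgt : 0 < INR t) by (apply lt_0_INR; lia).
  assert (Hth : 0 < th) by (unfold th; apply Rdiv_lt_0_compat; lra).
  assert (HMth : INR M * th = 2 * PI) by (unfold th; field; lra).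
  assert (A1 : 0 <= INR t * th) by nra.
  assert (A2 : INR t * th < 2 * PI) by nra.
  destruct (sin_eq_O_2PI_0 (INR t * th) A1 (Rlt_le _ _ A2) Hs) as [B|[B|B]].
  - nra.
  - rewrite B, cos_PI in Hc. lra.
  - lra.
Qed.

Lemma Ssum_val k : sum_n (fun j => Cpow (Cpow om k) j) N = if (k mod M =? 0)%nat then RtoC (INR M) else RtoC 0.
Proof.
  destruct (Nat.eqb_spec (k mod M) 0) as [E|E].
  - assert (Cpow om k = RtoC 1).
    { rewrite om_pow_mod, E. reflexivity. }
    rewrite H. rewrite (sum_n_ext _ (fun _ => RtoC 1)). apply sum_one. intros; apply Cpow_1_l.
  - assert (Hx : (Cpow om k - 1)%C <> RtoC 0).
    { intros H0. apply E. apply om_one. 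
      replace (Cpow om k) with ((Cpow om k - 1) + 1)%C by ring. rewrite H0. ring. }
    pose proof (geom_C (Cpow om k) N) as G.
    rewrite <- Cpow_mult_r, Nat.mul_comm, Cpow_mult_r in G. fold M in G. rewrite om_M, Cpow_1_l in G.
    replace (RtoC 1 - 1)%C with (RtoC 0) in G by ring.
    set (S0 := sum_n (fun j => Cpow (Cpow om k) j) N) in *.
    replace S0 with (/ (Cpow om k - 1) * ((Cpow om k - 1) * S0))%C by (field; auto).
    rewrite G. apply Cmult_0_r.
Qed.

Lemma coef_filter (h : nat -> C) (r e B q : R) m :
  0 < r -> 0 <= B -> 0 <= q < 1 -> (forall l, Cmod (h l) * r ^ l <= B * q ^ l) ->
  (forall z, Cmod z <= r -> exists v, is_series (fun l => (h l * Cpow z l)%C) v /\ Cmod v < e) ->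
  (m < M)%nat ->
  Cmod (h m) * r ^ m <= e + B * ((1 + q) / 2) ^ M / (1 - (1 + q) / 2).
Proof.
  intros Hr HB Hq Hb H HmM. set (s := (1 + q) / 2).
  assert (Hs : 0 <= s < 1) by (unfold s; lra).
  assert (Hqs : q <= s * s) by (unfold s; nra).
  set (d := (M - m)%nat). assert (Hd : M = (m + d)%nat) by (unfold d; lia).
  set (z := fun j => (RtoC r * Cpow om j)%C).
  assert (Hz : forall j, Cmod (z j) = r).
  { intros j. unfold z. rewrite Cmod_mult, Cmod_R, Cmod_pow. unfold om. rewrite Cmod_unit, pow1, Rabs_pos_eq; lra. }
  destruct (choice_nat (fun j v => is_series (fun l => (h l * Cpow (z j) l)%C) v /\ Cmod v < e))
    as [v Hv].
  { intros j. apply H. rewrite Hz. lra. }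
  set (c := fun j => Cpow om (j * d)).
  assert (Hc : forall j, Cmod (c j) = 1).
  { intros j. unfold c. rewrite Cmod_pow. unfold om. rewrite Cmod_unit. apply pow1. }
  set (A := sum_n (fun j => (c j * v j)%C) N).
  assert (HA : is_series (fun l => sum_n (fun j => (c j * (h l * Cpow (z j) l))%C) N) A).
  { apply is_series_sum_fin. intros j. apply is_series_Cmult. apply Hv. }
  set (b := fun l => ((h l * RtoC (r ^ l)) * (if ((l + d) mod M =? 0)%nat then RtoC (INR M) else RtoC 0))%C).
  assert (Hb2 : is_series b A).
  { apply (is_series_ext (fun l => sum_n (fun j => (c j * (h l * Cpow (z j) l))%C) N) b); [|exact HA]. intros l. unfold b. rewrite <- Ssum_val.
    rewrite <- sum_n_Cmult. apply sum_n_ext. intros j. unfold c, z.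
    rewrite Cpow_mult_l, <- RtoC_pow, <- !Cpow_mult_r.
    replace ((l + d) * j)%nat with (j * d + j * l)%nat by ring. rewrite Cpow_add_r. match goal with |- ?a = ?b => change (@eq C a b) end. ring. }
  assert (Hbm : b m = (h m * RtoC (r ^ m) * RtoC (INR M))%C).
  { unfold b. replace ((m + d) mod M)%nat with 0%nat. reflexivity. rewrite <- Hd. symmetry. apply Nat.Div0.mod_same. }
  set (b' := fun l => if (l =? m)%nat then RtoC 0 else b l).
  assert (Hb' : is_series b' (A - b m)%C).
  { apply (is_series_ext (fun l => plus (b l) (opp (if (l =? m)%nat then b m else RtoC 0)))).
    - intros l. unfold b'. destruct (Nat.eqb_spec l m) as [->|Hne]; unfold plus, opp; simpl.
      + ring.
      + ring.
    - apply (@is_series_minus C_AbsRing C_NormedModule); auto. apply is_series_single. }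
  set (K := INR M * B * s ^ M).
  destruct (SB b' (fun l => K * s ^ l) (K / (1 - s))) as [w [Hw Hwb]].
  { intros l. unfold b'. assert (0 <= K * s ^ l).
    { unfold K. apply Rmult_le_pos; [apply Rmult_le_pos; [apply Rmult_le_pos; [pose proof INR_M_pos; lra| auto]|] |]; apply pow_le; lra. }
    destruct (Nat.eqb_spec l m) as [->|Hne]. { rewrite Cmod_0; auto. }
    unfold b. destruct (Nat.eqb_spec ((l + d) mod M) 0) as [E|E].
    2:{ rewrite Cmult_0_r, Cmod_0. auto. }
    assert (HlM : (M <= l)%nat).
    { pose proof (Nat.div_mod_eq (l + d) M) as D. rewrite E in D.
      destruct ((l + d) / M)%nat as [|[|t]]; lia. }
    rewrite !Cmod_mult, !Cmod_R, !Rabs_pos_eq; [|pose proof INR_M_pos; lra| apply pow_le; lra].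
    specialize (Hb l).
    assert (E1 : q ^ l <= s ^ l * s ^ l) by (rewrite <- Rpow_mult_distr; apply pow_incr; lra).
    assert (E2 : s ^ l <= s ^ M) by (apply Rle_pow_le; [lra|lra|lia]).
    assert (E3 : 0 <= s ^ l) by (apply pow_le; lra).
    pose proof INR_M_pos.
    unfold K.
    assert (B * q ^ l <= B * s ^ M * s ^ l) by (apply Rle_trans with (B * (s ^ l * s ^ l)); [apply Rmult_le_compat_l; auto| assert (0 <= B * s ^ l) by (apply Rmult_le_pos; auto); nra]).
    assert (Cmod (h l) * r ^ l * INR M <= B * q ^ l * INR M) by (apply Rmult_le_compat_r; lra).
    nra. }
  { apply geom_scaled; auto. }
  assert (Ew : w = (A - b m)%C).
  { exact (@filterlim_locally_unique nat C_AbsRing C_NormedModule eventually (Proper_StrongProper _ eventually_filter) (sum_n b') w (A - b m)%C Hw Hb'). }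
  rewrite Ew in Hwb.
  assert (HAb : Cmod A <= INR M * e).
  { unfold A, sum_n. eapply Rle_trans. exact (@norm_sum_n_m C_AbsRing C_NormedModule _ 0%nat N).
    eapply Rle_trans. apply (sum_n_m_le _ (fun _ => e)).
    { intros j. rewrite normC, Cmod_mult, Hc, Rmult_1_l. left. apply Hv. }
    rewrite sum_n_m_const. replace (S N - 0)%nat with M by (unfold M; lia). lra. }
  assert (Hbmb : Cmod (b m) <= INR M * e + K / (1 - s)).
  { replace (b m) with (A + - (A - b m))%C by ring. eapply Rle_trans; [apply Cmod_triangle|].
    rewrite Cmod_opp. lra. }
  rewrite Hbm, !Cmod_mult, !Cmod_R, !Rabs_pos_eq in Hbmb; [|pose proof INR_M_pos; lra| apply pow_le; lra].
  pose proof INR_M_pos.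
  apply (Rmult_le_reg_r (INR M)); auto.
  replace ((e + B * s ^ M / (1 - s)) * INR M) with (INR M * e + K / (1 - s)) by (unfold K; field; lra).
  exact Hbmb.
Qed.

End Roots.


Lemma cauchy_est (h : nat -> C) (r e B q : R) :
  0 < r -> 0 <= B -> 0 <= q < 1 -> (forall l, Cmod (h l) * r ^ l <= B * q ^ l) ->
  (forall z, Cmod z <= r -> exists v, is_series (fun l => (h l * Cpow z l)%C) v /\ Cmod v < e) ->
  forall m, Cmod (h m) * r ^ m <= e.
Proof.
  intros Hr HB Hq Hb H m. apply Rnot_lt_le. intros Hlt.
  set (X := Cmod (h m) * r ^ m) in *.
  set (s := (1 + q) / 2). assert (Hs : 0 <= s < 1) by (unfold s; lra).
  destruct (small_pow s ((X - e) * (1 - s) / (B + 1)) Hs) as [n0 Hn0].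
  { apply Rdiv_lt_0_compat; [nra| lra]. }
  pose proof (coef_filter (n0 + m) h r e B q m Hr HB Hq Hb H ltac:(lia)) as C1.
  fold X in C1. fold s in C1.
  assert (E1 : s ^ (S (n0 + m)) <= s ^ n0) by (apply Rle_pow_le; [lra|lra|lia]).
  assert (E2 : 0 <= s ^ n0) by (apply pow_le; lra).
  assert (E3 : B * s ^ (S (n0 + m)) <= (B + 1) * s ^ n0) by nra.
  assert (E4 : (B + 1) * s ^ n0 < (X - e) * (1 - s)).
  { apply (Rmult_lt_reg_r (/ (B + 1))). apply Rinv_0_lt_compat; lra.
    replace ((B + 1) * s ^ n0 * / (B + 1)) with (s ^ n0) by (field; lra). exact Hn0. }
  assert (E5 : B * s ^ (S (n0 + m)) / (1 - s) < X - e) by (apply div_lt; lra).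
  lra.
Qed.

Lemma le_all_pos x : (forall e, 0 < e -> x <= e) -> x <= 0.
Proof. intros H. apply Rnot_lt_le. intros Hx. specialize (H (x / 2) ltac:(lra)). lra. Qed.

Lemma inZ_vanish g n : inZ g -> ~ finiteStop n -> g n = RtoC 0.
Proof.
  intros [Hg HZ] Hn. apply Cmod_eq_0.
  assert (Hp : 0 < (1/2) ^ n) by (apply pow_lt; lra).
  assert (Cmod (g n) * (1/2) ^ n <= 0).
  { apply le_all_pos. intros e He.
    destruct (HZ (1/2) e ltac:(lra) He) as [g' [Hsp Hcl]].
    set (h := fun l => (g l - g' l)%C).
    destruct (decay_minus g g' (inAD_decay g Hg) (span_decay g' Hsp) (1/2) ltac:(lra)) as [B [q [HB [Hq Hb]]]].
    pose proof (cauchy_est h (1/2) e B q ltac:(lra) HB Hq Hb Hcl n) as Hc.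
    unfold h in Hc. rewrite (span_vanish g' n Hsp Hn) in Hc. replace (g n - RtoC 0)%C with (g n) in Hc by ring. exact Hc. }
  pose proof (Cmod_ge_0 (g n)). nra.
Qed.

Lemma inZ_Fop f : inZ f -> inZ (Fop f).
Proof.
  intros [Hf HZ]. split.
  { apply decay_inAD, decay_Fop, inAD_decay; auto. }
  intros r eps Hr He.
  set (r' := (1 + r) / 2). assert (Hr' : 0 < r' < 1) by (unfold r'; lra).
  assert (Hr2 : r < r' ^ 2) by (unfold r'; nra).
  assert (Hr2p : 0 < r' ^ 2) by (apply pow_lt; lra). clearbody r'.
  set (q := r / r' ^ 2). assert (Hq : 0 <= q < 1).
  { unfold q. split. apply Rdiv_le_0_compat; lra. apply Rdiv_lt_1; lra. }
  set (e' := eps * (1 - q) / 2). assert (He' : 0 < e') by (unfold e'; apply Rdiv_lt_0_compat; nra).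
  destruct (HZ r' e' ltac:(lra) He') as [g' [Hsp Hcl]].
  exists (Fop g'). split; [apply span_Fop; auto|].
  set (h := fun l => (f l - g' l)%C).
  destruct (decay_minus f g' (inAD_decay f Hf) (span_decay g' Hsp) r' ltac:(lra)) as [B [q0 [HB [Hq0 Hb]]]].
  pose proof (cauchy_est h r' e' B q0 ltac:(lra) HB Hq0 Hb Hcl) as Hc.
  intros z Hz.
  destruct (SB (fun n => ((Fop f n - Fop g' n) * Cpow z n)%C) (fun n => e' * q ^ n) (e' / (1 - q))) as [v [Hv Hvb]].
  - intros n. rewrite !Fop_T. fold (h (T n)). rewrite Cmod_mult, Cmod_pow.
    eapply Rle_trans.
    { apply Rmult_le_compat_l. apply Cmod_ge_0. apply pow_incr. split; [apply Cmod_ge_0| exact Hz]. }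
    replace r with (q * r' ^ 2) by (unfold q; field; lra).
    apply Fop_bound; auto; lra.
  - apply geom_scaled; auto.
  - exists v. split; auto. eapply Rle_lt_trans; [exact Hvb|].
    apply div_lt; [lra|]. unfold e'. nra.
Qed.

Lemma Ceq_half (a b : C) : (a - b = b - a)%C -> (b - a = RtoC 0)%C.
Proof.
  destruct a as [x1 y1], b as [x2 y2]. unfold Cminus, Cplus, Copp, RtoC. simpl.
  intros H. injection H. intros. f_equal; lra.
Qed.

Lemma Csub_eq (x y : C) : (x - y = RtoC 0)%C -> x = y.
Proof. intros H. replace x with ((x - y) + y)%C by ring. rewrite H. ring. Qed.


Theorem mainTheorem11 :
  (forall f, inZ f -> inZ (Fop f)) /\
  Fop (Pol 0) = Pol 1 /\
  Fop (Pol 1) = (fun n => (Pol 0 n + Pol 2 n)%C) /\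
  (forall k, (2 <= k)%nat -> Fop (Pol k) = Pol (S k)) /\
  exists psi : coeffs,
    (forall m, finiteStop m -> psi m = RtoC 1) /\
    (forall m, ~ finiteStop m -> psi m = RtoC 0) /\
    (forall r eps, 0 <= r < 1 -> 0 < eps ->
       exists N0, forall N, (N0 <= N)%nat -> closeOn r eps psi (PolSum N)) /\
    inZ psi /\ psi <> (fun _ => RtoC 0) /\
    Fop psi = psi /\
    (forall g, inZ g -> Fop g = g -> exists c : C, forall n, g n = (c * psi n)%C) /\
    (forall g, inZ g ->
       let h := fun n => (Fop g n - g n)%C in
       Fop h = h -> Fop g = g).
Proof.
  split; [exact inZ_Fop|].
  split; [exact Fop_Pol0|].
  split; [exact Fop_Pol1|].
  split; [exact Fop_Polk|].
  exists psi.
  split; [exact psi_fs|].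
  split; [exact psi_nfs|].
  split; [exact psi_conv|].
  split; [exact psi_inZ|].
  split; [exact psi_nz|].
  split; [exact Fop_psi|].
  split.
  - intros g Hg HF. exists (g 1%nat). intros n.
    assert (HT : forall n, g (T n) = g n) by (intros k; rewrite <- Fop_T, HF; auto).
    destruct (classic (finiteStop n)) as [H|H].
    + destruct (fs_iter n H) as [k Hk]. rewrite psi_fs by auto. rewrite Cmult_1_r.
      rewrite <- (inv_iter g HT k n), Hk. auto.
    + rewrite psi_nfs by auto. rewrite Cmult_0_r. apply inZ_vanish; auto.
  - intros g Hg. cbv zeta. intros HF.
    set (k := fun n => (g (T n) - g n)%C).
    assert (HkT : forall n, k (T n) = k n).
    { intros n. unfold k. pose proof (f_equal (fun u => u n) HF) as E. simpl in E.
      rewrite !Fop_T in E. exact E. }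
    assert (Hk1 : k 1%nat = RtoC 0).
    { pose proof (HkT 1%nat) as E. unfold k in E |- *. rewrite T_1, T_2 in E. rewrite T_1.
      apply Ceq_half. exact E. }
    assert (Hk : forall n, k n = RtoC 0).
    { intros n. destruct (classic (finiteStop n)) as [H|H].
      - destruct (fs_iter n H) as [j Hj]. rewrite <- (inv_iter k HkT j n), Hj. auto.
      - unfold k. rewrite (inZ_vanish g n Hg H), (inZ_vanish g (T n) Hg (nfs_T n H)). ring. }
    apply functional_extensionality. intros n. rewrite Fop_T. apply Csub_eq. apply Hk.
Qed.
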